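(* Let $g\ge2$ and let $q_i(x,y)=a_ix^2+2b_ixy+c_iy^2$ ($i=1,\ldots,g$) be integer binary quadratic forms, irreducible over the integers, with $a_i\equiv1\pmod4$ and $D:=\prod_{p\le2g}p\prod_ka_kc_k\delta_k\prod_{i<j}\operatorname{Res}(q_i,q_j)\neq0$. For a prime $p\nmid D$ define $$\omega(p):=p\sum_{\substack{c_1\mid p,\ldots,c_g\mid p\\ p\mid c_1\cdots c_g}}\mu(p)\mu(c_1)\cdots\mu(c_g)\frac{\rho(c_1,\ldots,c_g)}{(c_1\cdots c_g)^2}.$$ Then for every prime $p\nmid D$, $$\omega(p)=p^{-1}\bigl(\rho(p,1,\ldots,1)+\rho(1,p,1,\ldots,1)+\cdots+\rho(1,\ldots,1,p)+1-g\bigr).$$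
   Context: $\delta_k$ is the discriminant of $q_k$, $\operatorname{Res}$ the resultant, $\mu$ the Möbius function. For positive integers $c_1,\ldots,c_g$: $\Lambda_{\mathbf c}:=\{\mathbf x\in\mathbb Z^2:c_i\mid q_i(\mathbf x)\ \forall i\}$ and $\rho(\mathbf c):=\#(\Lambda_{\mathbf c}\cap[0,c_1\cdots c_g)^2)$. *)

(* Defs.v *)
From HB Require Import structures.
From mathcomp Require Import all_boot all_order all_algebra.
From mathcomp Require Import mpoly.
Set Implicit Arguments. Unset Strict Implicit. Unset Printing Implicit Defensive.
Import Order.TTheory GRing.Theory Num.Theory.
Local Open Scope ring_scope.

(* Moebius function: mu(n) = (-1)^k if n > 0 is a product of k distinct
   primes, 0 if n is not squarefree (and mu(0) := 0). *)
Definition mobius (n : nat) : int :=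
  if (0 < n)%N && all (fun p => logn p n == 1)%N (primes n)
  then (-1) ^+ size (primes n) else 0.

Definition qform (a b c : int) (x y : int) : int :=
  a * x ^+ 2 + 2 * b * x * y + c * y ^+ 2.

Definition qform_mpoly (a b c : int) : {mpoly int[2]} :=
  a%:MP * 'X_ord0 ^+ 2 + (2 * b)%:MP * ('X_ord0 * 'X_ord_max)
  + c%:MP * 'X_ord_max ^+ 2.

Definition irreducible_elt (R : idomainType) (x : R) : Prop :=
  [/\ x != 0, x \isn't a GRing.unit &
      forall y z : R, x = y * z -> y \is a GRing.unit \/ z \is a GRing.unit].

Definition qdisc (a b c : int) : int := (2 * b) ^+ 2 - 4 * a * c.

Definition qform_poly (a b c : int) : {poly int} :=
  a *: 'X ^+ 2 + (2 * b) *: 'X + c%:P.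

(* Resultant of two binary quadratic forms (Sylvester determinant of their
   coefficient vectors), via mathcomp's resultant of the dehomogenisations. *)
Definition qres (a1 b1 c1 a2 b2 c2 : int) : int :=
  resultant (qform_poly a1 b1 c1) (qform_poly a2 b2 c2).

Definition bigD (g : nat) (a b c : 'I_g -> int) : int :=
  (\prod_(p < (2 * g).+1 | prime p) (p : nat)%:Z)
  * (\prod_(k < g) (a k * c k * qdisc (a k) (b k) (c k)))
  * (\prod_(i < g) \prod_(j < g | (i < j)%N)
       qres (a i) (b i) (c i) (a j) (b j) (c j)).

Definition rho (g : nat) (a b c : 'I_g -> int) (cc : 'I_g -> nat) : nat :=
  #|[pred x : 'I_(\prod_(i < g) cc i) * 'I_(\prod_(i < g) cc i) |
      [forall i, ((cc i)%:Z %| qform (a i) (b i) (c i) (x.1 : nat)%:Z (x.2 : nat)%:Z)%Z]]|.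

(* omega(p) = p * sum_{c_i | p, p | c_1...c_g} mu(p) mu(c_1)...mu(c_g)
                     rho(c) / (c_1...c_g)^2.
   The c_i range over positive divisors of p, encoded in 'I_p.+1. *)
Definition omega (g : nat) (a b c : 'I_g -> int) (p : nat) : rat :=
  p%:R * \sum_(cc : {ffun 'I_g -> 'I_p.+1} |
                 [forall i, (0 < cc i)%N && ((cc i : nat) %| p)%N]
                 && (p %| \prod_(i < g) (cc i : nat))%N)
     ((mobius p)%:~R * (\prod_(i < g) (mobius (cc i))%:~R)
      * (rho a b c (fun i => (cc i : nat)))%:R
      / ((\prod_(i < g) (cc i : nat)) ^ 2)%:R).

Definition unitvec (g : nat) (p : nat) (i : 'I_g) : 'I_g -> nat :=
  fun j => if j == i then p else 1%N.

(* Main.v *)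
Require Import Defs.
From HB Require Import structures.
From mathcomp Require Import all_boot all_order all_algebra.
From mathcomp Require Import mpoly.
From mathcomp Require Import ring.
From Stdlib Require Import FunctionalExtensionality.
Import Order.TTheory GRing.Theory Num.Theory.
Local Open Scope ring_scope.

Lemma coprime_pz (p : nat) (a : int) : prime p -> ~~ (p%:Z %| a)%Z -> coprimez p%:Z a.
Proof. by move=> pp; rewrite coprimezE dvdzE /= prime_coprime. Qed.

Lemma prime_dvdzM (p : nat) (a b : int) : prime p -> (p%:Z %| a * b)%Z -> (p%:Z %| a)%Z || (p%:Z %| b)%Z.
Proof.
move=> pp H; case Ha: (p%:Z %| a)%Z => //=.
by rewrite -(Gauss_dvdzr _ (coprime_pz _ _ pp (negbT Ha))).
Qed.

Lemma size_qpoly (a b c : int) : a != 0 -> (1 < size (qform_poly a b c))%N.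
Proof.
move=> a0; have : (qform_poly a b c)`_2 != 0.
  by rewrite /qform_poly !coefE /= mulr1 !mulr0 !addr0.
apply: contraR; rewrite -leqNgt => h.
by rewrite nth_default // (leq_trans h).
Qed.

Lemma horner_qpoly (a b c z : int) : (qform_poly a b c).[z] = a * z ^+ 2 + 2 * b * z + c.
Proof. by rewrite /qform_poly !hornerE. Qed.

Lemma key (a1 b1 c1 a2 b2 c2 : int) (p : nat) (x y : int) : prime p ->
  ~~ (p%:Z %| a1)%Z -> ~~ (p%:Z %| a2)%Z ->
  ~~ (p%:Z %| qres a1 b1 c1 a2 b2 c2)%Z ->
  (p%:Z %| qform a1 b1 c1 x y)%Z -> (p%:Z %| qform a2 b2 c2 x y)%Z ->
  (p%:Z %| x)%Z && (p%:Z %| y)%Z.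
Proof.
move=> pp na1 na2 nR h1 h2.
have a1n0 : a1 != 0 by apply: contra na1 => /eqP ->; rewrite dvdz0.
have a2n0 : a2 != 0 by apply: contra na2 => /eqP ->; rewrite dvdz0.
case Hy: (p%:Z %| y)%Z; last first.
  exfalso; move: (coprime_pz _ _ pp (negbT Hy)) => /coprimezP [[u v] /= huv].
  have [[U V] /= _ hR] := resultant_in_ideal (size_qpoly a1 b1 c1 a1n0) (size_qpoly a2 b2 c2 a2n0).
  pose z := x * v.
  have hz : forall a b c : int, (p%:Z %| qform a b c x y)%Z -> (p%:Z %| (qform_poly a b c).[z])%Z.
    move=> a b c h.
    have e : (qform_poly a b c).[z] * y ^+ 2 = qform a b c x y + (v * y - 1) * (a * x ^+ 2 * (v * y + 1) + 2 * b * x * y).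
      by rewrite horner_qpoly /z /qform; ring.
    have e2 : v * y - 1 = - (u * p%:Z) by rewrite -huv; ring.
    have : (p%:Z %| (qform_poly a b c).[z] * y ^+ 2)%Z.
      by rewrite e e2 rpredD // mulNr rpredN dvdz_mulr // dvdz_mull.
    by rewrite Gauss_dvdzl // coprimezXr // coprime_pz // Hy.
  move/negP: nR; apply.
  have -> : qres a1 b1 c1 a2 b2 c2 = ((qres a1 b1 c1 a2 b2 c2)%:P).[z] by rewrite hornerC.
  rewrite /qres hR hornerD !hornerM.
  by rewrite rpredD // dvdz_mull // hz.
rewrite andbT.
have : (p%:Z %| a1 * (x * x))%Z.
  have e : a1 * (x * x) = qform a1 b1 c1 x y - y * (2 * b1 * x + c1 * y) by rewrite /qform; ring.
  rewrite e rpredD // rpredN dvdz_mulr //.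
rewrite Gauss_dvdzr ?coprime_pz // => /(prime_dvdzM _ _ _ pp).
by rewrite orbb.
Qed.

Lemma card_mult (N k p : nat) : (0 < p)%N -> N = (k * p)%N ->
  #|[pred i : 'I_N | (p %| i)%N]| = k.
Proof.
move=> p0 ->.
have lt : forall j : 'I_k, (j * p < k * p)%N by move=> j; rewrite ltn_pmul2r.
pose f (j : 'I_k) : 'I_(k * p) := Ordinal (lt j).
have injf : injective f.
  by move=> j1 j2 /(congr1 val) /= /eqP; rewrite eqn_pmul2r // => /eqP /val_inj.
apply: (etrans _ (card_ord k)); rewrite -(card_codom injf); apply: eq_card => i; rewrite inE.
apply/idP/codomP => [/dvdnP [q hq] | [j ->]]; last by rewrite /= dvdn_mull.
have qk : (q < k)%N by rewrite -(ltn_pmul2r p0) -hq.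
by exists (Ordinal qk); apply: val_inj; rewrite /= hq.
Qed.

Lemma qform_dvd (p : nat) (a b c : int) (x y : nat) : (p %| x)%N -> (p %| y)%N ->
  (p%:Z %| qform a b c x%:Z y%:Z)%Z.
Proof.
move=> /dvdnP [u ->] /dvdnP [v ->]; rewrite !PoszM.
have -> : qform a b c (u%:Z * p%:Z) (v%:Z * p%:Z) = p%:Z * (p%:Z * qform a b c u%:Z v%:Z).
  by rewrite /qform; ring.
exact: dvdz_mulr (dvdzz _).
Qed.

Lemma rho_multi g (a b c : 'I_g -> int) p (cc : 'I_g -> nat) (S : {set 'I_g}) : prime p ->
  (forall i j : 'I_g, (i < j)%N -> ~~ (p%:Z %| qres (a i) (b i) (c i) (a j) (b j) (c j))%Z) ->
  (forall i, ~~ (p%:Z %| a i)%Z) ->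
  (forall i, cc i = if i \in S then p else 1%N) -> (2 <= #|S|)%N ->
  rho a b c cc = (p ^ (#|S|.-1) * p ^ (#|S|.-1))%N.
Proof.
move=> pp hR ha hcc hS.
have p0 : (0 < p)%N by apply: prime_gt0.
rewrite /rho.
have HN : (\prod_(i < g) cc i = p ^ (#|S|.-1) * p)%N.
  rewrite (eq_bigr _ (fun i _ => hcc i)) -big_mkcond /= prod_nat_const -expnSr prednK //.
  by apply: leq_trans hS.
rewrite -(card_mult _ _ _ p0 HN) -cardX; apply: eq_card => -[x1 x2]; rewrite !inE /=.
apply/forallP/andP => [H | [d1 d2] i]; last first.
  by rewrite hcc; case: ifP => _; [apply: qform_dvd | apply: dvd1z].
have : (0 < #|S|)%N by apply: leq_trans hS.
rewrite card_gt0 => /set0Pn [i iS].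
have : (0 < #|S :\ i|)%N by rewrite (cardsD1 i) iS in hS; rewrite -ltnS.
rewrite card_gt0 => /set0Pn [j]; rewrite !inE => /andP [ji jS].
have hi := H i; have hj := H j; rewrite hcc iS in hi; rewrite hcc jS in hj.
have : (p%:Z %| x1%:Z)%Z && (p%:Z %| x2%:Z)%Z.
  case: (ltngtP i j) => [lij | lji | eij].
  - exact: key (ha i) (ha j) (hR _ _ lij) hi hj.
  - exact: key (ha j) (ha i) (hR _ _ lji) hj hi.
  - by move: ji; rewrite (val_inj eij) eqxx.
by rewrite !dvdzE /= => /andP.
Qed.

Lemma sum_sign g (i0 : 'I_g) : \sum_(S : {set 'I_g}) ((-1) ^+ #|S| : rat) = 0.
Proof.
pose t (S : {set 'I_g}) := if i0 \in S then S :\ i0 else i0 |: S.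
have tK : involutive t.
  move=> S; rewrite /t; case: (boolP (i0 \in S)) => h.
    by rewrite setD11 setD1K.
  by rewrite setU11 setU1K.
have ht : forall S, ((-1) ^+ #|t S| : rat) = - (-1) ^+ #|S|.
  move=> S; rewrite /t; case: ifP => h.
    by rewrite [in RHS](cardsD1 i0) h exprS mulN1r opprK.
  by rewrite cardsU1 h exprS mulN1r.
have E : \sum_(S : {set 'I_g}) ((-1) ^+ #|S| : rat) = \sum_(S : {set 'I_g}) ((-1) ^+ #|t S| : rat).
  exact: (reindex_inj (inv_inj tK)).
rewrite (eq_bigr _ (fun S _ => ht S)) sumrN in E.
have : (\sum_(S : {set 'I_g}) ((-1) ^+ #|S| : rat)) *+ 2 == 0.
  by rewrite mulr2n {1}E addNr.
by rewrite mulrn_eq0 /= => /eqP.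
Qed.

Lemma sum_single g (X : {set 'I_g} -> rat) :
  \sum_(S : {set 'I_g}) (#|S| == 1)%:R * X S = \sum_(i < g) X [set i].
Proof.
rewrite (eq_bigr (fun S : {set 'I_g} => if #|S| == 1%N then X S else 0)); last first.
  by move=> S _; case: (#|S| == 1%N); rewrite ?mul1r ?mul0r.
rewrite -big_mkcond /=.
transitivity (\sum_(S in [set [set i] | i : 'I_g]) X S).
  apply: eq_bigl => S; apply/cards1P/imsetP => [[x ->] | [x _ ->]]; by exists x.
by rewrite big_imset //; move=> x y _ _; apply: set1_inj.
Qed.

Lemma rho_ext g (a b c : 'I_g -> int) (f f' : 'I_g -> nat) :
  (forall i, f i = f' i) -> rho a b c f = rho a b c f'.
Proof. by move=> h; rewrite (functional_extensionality _ _ h). Qed.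

Lemma mobius_prime p : prime p -> mobius p = -1.
Proof. by move=> pp; rewrite /mobius primes_prime // prime_gt0 //= logn_prime // eqxx. Qed.

Lemma mobius1 : mobius 1 = 1.
Proof. by []. Qed.

Theorem lemma3p3 (g : nat) (a b c : 'I_g -> int) :
  (2 <= g)%N ->
  (forall i, irreducible_elt (qform_mpoly (a i) (b i) (c i))) ->
  (forall i, (a i = 1 %[mod 4])%Z) ->
  bigD a b c != 0 ->
  forall p : nat, prime p -> ~~ ((p%:Z) %| bigD a b c)%Z ->
  omega a b c p =
    p%:R^-1 * ((\sum_(i < g) (rho a b c (unitvec p i))%:R) + 1 - g%:R).
Proof.
move=> g2 _ _ _ p pp nD.
have p1 : (1 < p)%N := prime_gt1 pp.
have ha : forall i, ~~ (p%:Z %| a i)%Z.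
  move=> i; apply: contra nD => h; rewrite /bigD; apply: dvdz_mulr; apply: dvdz_mull.
  rewrite (bigD1 i) //=; apply: dvdz_mulr; apply: dvdz_mulr; exact: dvdz_mulr h.
have hR : forall i j : 'I_g, (i < j)%N -> ~~ (p%:Z %| qres (a i) (b i) (c i) (a j) (b j) (c j))%Z.
  move=> i j lij; apply: contra nD => h; rewrite /bigD; apply: dvdz_mull.
  rewrite (bigD1 i) //=; apply: dvdz_mulr; rewrite (bigD1 j) //=; exact: dvdz_mulr h.
pose h (S : {set 'I_g}) : {ffun 'I_g -> 'I_p.+1} :=
  [ffun i => if i \in S then ord_max else inord 1].
have hv : forall S (i : 'I_g), (h S i : nat) = if i \in S then p else 1%N.
  move=> S i; rewrite ffunE; case: (i \in S) => //=; rewrite inordK //; exact: prime_gt0 pp.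
have hprod : forall S, (\prod_(i < g) ((h S) i : nat) = p ^ #|S|)%N.
  by move=> S; rewrite (eq_bigr _ (fun i _ => hv S i)) -big_mkcond prod_nat_const.
rewrite /omega (reindex h) /=; last first.
  exists (fun cc : {ffun 'I_g -> 'I_p.+1} => [set i | (cc i : nat) == p]).
  - move=> S _; apply/setP => i; rewrite inE (hv S i).
    by case: (i \in S); rewrite ?eqxx // ltn_eqF.
  - move=> cc; rewrite inE => /andP [/forallP H _]; apply/ffunP => i.
    apply: val_inj; rewrite /= hv inE; case: eqP => [-> // | ne].
    have /andP [c0 cd] := H i.
    by case/primeP: pp => _ /(_ _ cd) /orP [/eqP -> | /eqP].
rewrite (eq_bigl (fun S => S != set0)); last first.
  move=> S /=; rewrite hprod.
  have -> : [forall i, (0 < h S i)%N && (h S i %| p)%N].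
    apply/forallP => i; rewrite hv; case: (i \in S).
      by rewrite prime_gt0 // dvdnn.
    by rewrite dvd1n.
  rewrite /= -cards_eq0; case: #|S| => [|k].
    by rewrite expn0 dvdn1 eqxx /=; apply/eqP => e; rewrite e in p1.
  by rewrite expnS dvdn_mulr.
pose H (S : {set 'I_g}) : rat := - (-1) ^+ #|S|
   + (#|S| == 1%N)%:R * ((rho a b c (fun i => (h S i : nat)))%:R - 1).
rewrite mulr_sumr (eq_bigr (fun S => p%:R^-1 * H S)); last first.
  move=> S S0.
  have Hmu : \prod_(i < g) ((mobius (h S i))%:~R : rat) = (-1) ^+ #|S|.
    rewrite (eq_bigr (fun i => if i \in S then -1 else 1)); last first.
      by move=> i _; rewrite hv; case: (i \in S); rewrite ?(mobius_prime _ pp) ?mobius1.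
    rewrite -prodr_const [RHS]big_mkcond /=; apply: eq_bigr => i _.
    by case: (i \in S).
  rewrite Hmu hprod (mobius_prime _ pp) /H.
  have p0 : (p%:R : rat) != 0 by rewrite pnatr_eq0 -lt0n prime_gt0.
  have : (0 < #|S|)%N by rewrite card_gt0.
  case: (ltngtP #|S| 1) => [|hS1 _|e1 _].
  - by rewrite ltnS leqn0 => /eqP ->.
  - have hcc : forall i, (fun i => (h S i : nat)) i = if i \in S then p else 1%N by move=> i; apply: hv.
    rewrite (rho_multi g a b c p _ S pp hR ha hcc hS1).
    have [k ek] : exists k, #|S| = k.+1 by exists #|S|.-1; rewrite prednK // ltnW.
    have n1 : ((-1 : int)%:~R : rat) = -1 by [].
    rewrite ek /= n1 !natrM !natrX mul0r addr0 !exprS.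
    field; by rewrite p0 expf_neq0.
  - have n1 : ((-1 : int)%:~R : rat) = -1 by [].
    rewrite e1 /= n1 mul1r expr1 expn1 natrX; field; exact: p0.
rewrite -mulr_sumr; congr (_ * _).
have E : \sum_(S : {set 'I_g}) H S = H set0 + \sum_(S | S != set0) H S.
  by rewrite (bigD1 set0).
have E0 : H set0 = -1 by rewrite /H cards0 /= mul0r addr0 expr0.
have i0 : 'I_g by exists 0%N; apply: leq_trans g2.
have E1 : \sum_(S : {set 'I_g}) H S = \sum_(i < g) (rho a b c (unitvec p i))%:R - g%:R.
  rewrite big_split /= sumrN sum_sign // oppr0 add0r sum_single sumrB sumr_const card_ord.
  congr (_ - _); apply: eq_bigr => i _; congr (_%:R); apply: rho_ext => j.
  by rewrite hv in_set1.
rewrite E0 E1 in E.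
by rewrite -[\sum_(S | S != set0) H S]add0r -(addNr (-1)) -addrA -E; ring.
Qed.
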